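(* Let $A$ be a faithful Banach algebra and let $B$ be a proper right abstract Segal algebra in $A$. Then $B^* \neq \langle B^* \triangle B^{**}\rangle$. Symmetrically, if $B$ is a proper left abstract Segal algebra in $A$, then $B^* \neq \langle B^{**} \square B^*\rangle$.
   Context: Arens-type module actions: for a Banach algebra $B$, $a,b\in B$, $f\in B^*$, $m\in B^{**}$, define $f\square a\in B^*$ by $\langle f\square a,b\rangle=\langle f,ab\rangle$ and $m\square f\in B^*$ by $\langle m\square f,a\rangle=\langle m,f\square a\rangle$; define $a\triangle f\in B^*$ by $\langle a\triangle f,b\rangle=\langle f,ba\rangle$ and $f\triangle m\in B^*$ by $\langle f\triangle m,a\rangle=\langle m,a\triangle f\rangle$. For sets $X,Y$ of such objects, $\langle X\triangle Y\rangle$ (resp. $\langle X\square Y\rangle$) denotes the linear span of all products $x\triangle y$ (resp. $x\square y$), $x\in X$, $y\in Y$. A faithful Banach algebra $A$ is one whose relevant annihilators are trivial (if $xa=0$ for all $x\in A$, or $ax=0$ for all $x\in A$, then $a=0$). A right abstract Segal algebra in $A$ is a dense subspace $B\subseteq A$ which is a right ideal of $A$ ($BA\subseteq B$) and is a Banach algebra under a norm $\|\cdot\|_B$ such that $\|b\|_A\le C\|b\|_B$ for $b\in B$ and $\|ba\|_B\le C\|b\|_B\|a\|_A$ for $b\in B$, $a\in A$, for some constant $C$; a left abstract Segal algebra is defined symmetrically ($AB\subseteq B$, $\|ab\|_B\le C\|a\|_A\|b\|_B$). It is proper if $\|\cdot\|_A$ and $\|\cdot\|_B$ are not equivalent on $B$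 (equivalently $B\neq A$). *)

(* Defs.v *)
From Stdlib Require Import Reals List.
Open Scope R_scope.

Record C := mkC { Re : R; Im : R }.
Definition C0 : C := mkC 0 0.
Definition C1 : C := mkC 1 0.
Definition Cadd (z w : C) : C := mkC (Re z + Re w) (Im z + Im w).
Definition Cmul (z w : C) : C :=
  mkC (Re z * Re w - Im z * Im w) (Re z * Im w + Im z * Re w).
Definition Cabs (z : C) : R := sqrt (Re z * Re z + Im z * Im z).

Record BanachAlgebra := {
  car :> Type;
  zero : car;
  add : car -> car -> car;
  opp : car -> car;
  scal : C -> car -> car;
  mul : car -> car -> car;
  norm : car -> R;
  add_assoc : forall x y z, add x (add y z) = add (add x y) z;
  add_comm : forall x y, add x y = add y x;
  add_zero : forall x, add x zero = x;
  add_opp : forall x, add x (opp x) = zero;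
  scal_assoc : forall c d x, scal c (scal d x) = scal (Cmul c d) x;
  scal_one : forall x, scal C1 x = x;
  scal_addr : forall c x y, scal c (add x y) = add (scal c x) (scal c y);
  scal_addl : forall c d x, scal (Cadd c d) x = add (scal c x) (scal d x);
  mul_assoc : forall x y z, mul x (mul y z) = mul (mul x y) z;
  mul_addr : forall x y z, mul x (add y z) = add (mul x y) (mul x z);
  mul_addl : forall x y z, mul (add x y) z = add (mul x z) (mul y z);
  mul_scall : forall c x y, mul (scal c x) y = scal c (mul x y);
  mul_scalr : forall c x y, mul x (scal c y) = scal c (mul x y);
  norm_ge0 : forall x, 0 <= norm x;
  norm_eq0 : forall x, norm x = 0 -> x = zero;
  norm_triangle : forall x y, norm (add x y) <= norm x + norm y;
  norm_scal : forall c x, norm (scal c x) = Cabs c * norm x;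
  norm_mul : forall x y, norm (mul x y) <= norm x * norm y;
  complete : forall u : nat -> car,
    (forall eps, 0 < eps -> exists N, forall p q, (N <= p)%nat -> (N <= q)%nat ->
        norm (add (u p) (opp (u q))) < eps) ->
    exists l, forall eps, 0 < eps -> exists N, forall p, (N <= p)%nat ->
        norm (add (u p) (opp l)) < eps
}.

Arguments zero {_}. Arguments add {_}. Arguments opp {_}. Arguments scal {_}.
Arguments mul {_}. Arguments norm {_}.

Definition faithful (A : BanachAlgebra) : Prop :=
  forall a : A, (forall x : A, mul x a = zero) \/ (forall x : A, mul a x = zero) -> a = zero.

Definition SegalBanach (A : BanachAlgebra) (mem : A -> Prop) (nB : A -> R) : Prop :=
  mem zero /\ (forall x y, mem x -> mem y -> mem (add x y)) /\
  (forall c x, mem x -> mem (scal c x)) /\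
  (forall x y, mem x -> mem y -> mem (mul x y)) /\
  (forall x, mem x -> 0 <= nB x) /\
  (forall x, mem x -> nB x = 0 -> x = zero) /\
  (forall x y, mem x -> mem y -> nB (add x y) <= nB x + nB y) /\
  (forall c x, mem x -> nB (scal c x) = Cabs c * nB x) /\
  (forall x y, mem x -> mem y -> nB (mul x y) <= nB x * nB y) /\
  (forall u : nat -> A, (forall k, mem (u k)) ->
    (forall eps, 0 < eps -> exists N, forall p q, (N <= p)%nat -> (N <= q)%nat ->
        nB (add (u p) (opp (u q))) < eps) ->
    exists l, mem l /\ forall eps, 0 < eps -> exists N, forall p, (N <= p)%nat ->
        nB (add (u p) (opp l)) < eps) /\
  (forall (a : A) eps, 0 < eps -> exists b, mem b /\ norm (add a (opp b)) < eps).

Definition right_segal (A : BanachAlgebra) (mem : A -> Prop) (nB : A -> R) : Prop :=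
  SegalBanach A mem nB /\
  (forall b a, mem b -> mem (mul b a)) /\
  exists K, (forall b, mem b -> norm b <= K * nB b) /\
            (forall b a, mem b -> nB (mul b a) <= K * nB b * norm a).

Definition left_segal (A : BanachAlgebra) (mem : A -> Prop) (nB : A -> R) : Prop :=
  SegalBanach A mem nB /\
  (forall b a, mem b -> mem (mul a b)) /\
  exists K, (forall b, mem b -> norm b <= K * nB b) /\
            (forall b a, mem b -> nB (mul a b) <= K * norm a * nB b).

(** Proper: the norms of A and B are not equivalent on B. *)
Definition proper (A : BanachAlgebra) (mem : A -> Prop) (nB : A -> R) : Prop :=
  ~ (exists c d, 0 < c /\ 0 < d /\
       forall b, mem b -> norm b <= c * nB b /\ nB b <= d * norm b).

(** * Dual and bidual of (B, nB).
   A functional is a map A -> C; only its values on B matter. *)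
Definition fadd (A : BanachAlgebra) (f g : A -> C) : A -> C := fun x => Cadd (f x) (g x).
Definition fscal (A : BanachAlgebra) (c : C) (f : A -> C) : A -> C := fun x => Cmul c (f x).

Definition fbound (A : BanachAlgebra) (mem : A -> Prop) (nB : A -> R) (f : A -> C) (K : R) :=
  0 <= K /\ forall x, mem x -> Cabs (f x) <= K * nB x.

Definition in_dual (A : BanachAlgebra) (mem : A -> Prop) (nB : A -> R) (f : A -> C) : Prop :=
  (forall x y, mem x -> mem y -> f (add x y) = Cadd (f x) (f y)) /\
  (forall c x, mem x -> f (scal c x) = Cmul c (f x)) /\
  exists K, fbound A mem nB f K.

Definition in_bidual (A : BanachAlgebra) (mem : A -> Prop) (nB : A -> R)
    (m : (A -> C) -> C) : Prop :=
  (forall f g, in_dual A mem nB f -> in_dual A mem nB g ->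
      m (fadd A f g) = Cadd (m f) (m g)) /\
  (forall c f, in_dual A mem nB f -> m (fscal A c f) = Cmul c (m f)) /\
  exists M, 0 <= M /\ forall f K, in_dual A mem nB f -> fbound A mem nB f K ->
      Cabs (m f) <= M * K.

Definition tri_af (A : BanachAlgebra) (a : A) (f : A -> C) : A -> C := fun b => f (mul b a).
Definition tri_fm (A : BanachAlgebra) (f : A -> C) (m : (A -> C) -> C) : A -> C :=
  fun a => m (tri_af A a f).
Definition sq_fa (A : BanachAlgebra) (f : A -> C) (a : A) : A -> C := fun b => f (mul a b).
Definition sq_mf (A : BanachAlgebra) (m : (A -> C) -> C) (f : A -> C) : A -> C :=
  fun a => m (sq_fa A f a).

(** Linear spans (as subsets of functionals, compared on B). *)
Definition span_tri (A : BanachAlgebra) (mem : A -> Prop) (nB : A -> R) (g : A -> C) : Prop :=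
  exists l : list (C * (A -> C) * ((A -> C) -> C)),
    Forall (fun t => in_dual A mem nB (snd (fst t)) /\ in_bidual A mem nB (snd t)) l /\
    forall a, mem a ->
      g a = fold_right (fun t acc => Cadd (Cmul (fst (fst t)) (tri_fm A (snd (fst t)) (snd t) a)) acc) C0 l.

Definition span_sq (A : BanachAlgebra) (mem : A -> Prop) (nB : A -> R) (g : A -> C) : Prop :=
  exists l : list (C * ((A -> C) -> C) * (A -> C)),
    Forall (fun t => in_bidual A mem nB (snd (fst t)) /\ in_dual A mem nB (snd t)) l /\
    forall a, mem a ->
      g a = fold_right (fun t acc => Cadd (Cmul (fst (fst t)) (sq_mf A (snd (fst t)) (snd t) a)) acc) C0 l.

(* Main.v *)
Require Import Defs.
From Stdlib Require Import Reals List Lra Lia ClassicalEpsilon Classical.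
Open Scope R_scope.

Definition rs {A : BanachAlgebra} (t : R) (x : A) : A := scal (mkC t 0) x.

Lemma add0l (A : BanachAlgebra) (x : A) : add zero x = x.
Proof. rewrite add_comm. apply add_zero. Qed.

Lemma add_cancel (A : BanachAlgebra) (y : A) : add y y = y -> y = zero.
Proof.
  intros H. assert (E: add (add y y) (opp y) = add y (opp y)) by (rewrite H; reflexivity).
  rewrite <- add_assoc, add_opp, add_zero in E. exact E.
Qed.

Lemma rs0 (A : BanachAlgebra) (x : A) : rs 0 x = zero.
Proof.
  apply add_cancel. unfold rs. rewrite <- scal_addl. f_equal. unfold Cadd; simpl; f_equal; ring.
Qed.

Lemma rs1 (A : BanachAlgebra) (x : A) : rs 1 x = x.
Proof. apply scal_one. Qed.

Lemma rs_rs (A : BanachAlgebra) s t (x : A) : rs s (rs t x) = rs (s*t) x.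
Proof. unfold rs. rewrite scal_assoc. f_equal. unfold Cmul; simpl; f_equal; ring. Qed.

Lemma rs_addl (A : BanachAlgebra) s t (x : A) : rs (s+t) x = add (rs s x) (rs t x).
Proof. unfold rs. rewrite <- scal_addl. f_equal. unfold Cadd; simpl; f_equal; ring. Qed.

Lemma rs_addr (A : BanachAlgebra) t (x y : A) : rs t (add x y) = add (rs t x) (rs t y).
Proof. apply scal_addr. Qed.

Lemma rs_zero (A : BanachAlgebra) t : rs t (@zero A) = zero.
Proof. rewrite <- (rs0 A zero), rs_rs. rewrite Rmult_0_r. reflexivity. Qed.

Lemma add_neg (A : BanachAlgebra) (x : A) : add x (rs (-1) x) = zero.
Proof. pattern x at 1; rewrite <- (rs1 A x). rewrite <- rs_addl.
  replace (1 + -1) with 0 by ring. apply rs0. Qed.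

Lemma add_neg_l (A : BanachAlgebra) (x : A) : add (rs (-1) x) x = zero.
Proof. rewrite add_comm. apply add_neg. Qed.

Lemma add_sub_cancel (A : BanachAlgebra) (x y : A) : add (add x y) (rs (-1) x) = y.
Proof.
  rewrite (add_comm A x y), <- add_assoc, add_neg, add_zero. reflexivity.
Qed.

Lemma add_swap4 (A : BanachAlgebra) (a b c d : A) :
  add (add a b) (add c d) = add (add a c) (add b d).
Proof.
  rewrite <- !add_assoc. f_equal. rewrite !add_assoc. f_equal. apply add_comm.
Qed.

Lemma Cabs_real t : Cabs (mkC t 0) = Rabs t.
Proof. unfold Cabs; simpl. rewrite <- sqrt_Rsqr_abs. f_equal. unfold Rsqr. ring. Qed.

Lemma norm_rs (A : BanachAlgebra) t (x : A) : norm (rs t x) = Rabs t * norm x.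
Proof. unfold rs. rewrite norm_scal, Cabs_real. reflexivity. Qed.

Definition basic (A : BanachAlgebra) (mem : A -> Prop) (nB : A -> R) : Prop :=
  mem zero /\ (forall x y, mem x -> mem y -> mem (add x y)) /\
  (forall c x, mem x -> mem (scal c x)) /\
  (forall x, mem x -> 0 <= nB x) /\
  (forall x y, mem x -> mem y -> nB (add x y) <= nB x + nB y) /\
  (forall c x, mem x -> nB (scal c x) = Cabs c * nB x).

Lemma Segal_basic (A : BanachAlgebra) mem nB : SegalBanach A mem nB -> basic A mem nB.
Proof.
  intros (h1&h2&h3&h4&h5&h6&h7&h8&_). repeat split; auto.
Qed.

Definition sublin (A : BanachAlgebra) (mem : A -> Prop) (q : A -> R) : Prop :=
  (forall x y, mem x -> mem y -> q (add x y) <= q x + q y) /\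
  (forall t x, 0 <= t -> mem x -> q (rs t x) = t * q x).

Lemma sublin_zero (A : BanachAlgebra) mem q : mem zero -> sublin A mem q -> q zero = 0.
Proof.
  intros Hz [_ Hh]. rewrite <- (rs0 A zero), Hh; auto; lra.
Qed.

Lemma sublin_neg (A : BanachAlgebra) mem (q : A -> R) x nB : basic A mem nB -> sublin A mem q -> mem x ->
  0 <= q x + q (rs (-1) x).
Proof.
  intros (h1&h2&h3&_) Hq Hx. rewrite <- (sublin_zero A mem q h1 Hq), <- (add_neg A x).
  apply Hq; auto. apply h3; auto.
Qed.

Definition sup (E : R -> Prop) : R := epsilon (inhabits 0) (fun m => is_lub E m).

Lemma sup_spec E : bound E -> (exists x, E x) -> is_lub E (sup E).
Proof.
  intros Hb Hn. unfold sup. apply epsilon_spec.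
  destruct (completeness E Hb Hn) as [m Hm]. eauto.
Qed.

Lemma sup_ub E x M : (forall y, E y -> y <= M) -> E x -> x <= sup E.
Proof.
  intros HM Hx. apply (sup_spec E); [exists M; exact HM | eauto | exact Hx].
Qed.

Lemma sup_le E M : (exists x, E x) -> (forall y, E y -> y <= M) -> sup E <= M.
Proof.
  intros Hn HM. apply (sup_spec E); [exists M; exact HM | exact Hn | exact HM].
Qed.

Lemma mem_rs (A : BanachAlgebra) mem nB (x : A) t : basic A mem nB -> mem x -> mem (rs t x).
Proof. intros (h1&h2&h3&_) Hx. apply h3; auto. Qed.

Definition rE (A : BanachAlgebra) (q : A -> R) (a x : A) : R -> Prop :=
  fun y => exists t, 0 <= t /\ y = t * q a - q (add x (rs t a)).
Definition rr (A : BanachAlgebra) (q : A -> R) (a x : A) : R := - sup (rE A q a x).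

Lemma rE_bound (A : BanachAlgebra) mem nB q (a x : A) : basic A mem nB -> sublin A mem q -> mem a -> mem x ->
  forall y, rE A q a x y -> y <= q (rs (-1) x).
Proof.
  intros HB Hq Ha Hx y [t [Ht ->]].
  destruct HB as (h1&h2&h3&_).
  assert (E : q (rs t a) = t * q a) by (apply Hq; auto).
  rewrite <- (add_sub_cancel A x (rs t a)) in E.
  assert (q (add (add x (rs t a)) (rs (-1) x)) <= q (add x (rs t a)) + q (rs (-1) x)).
  { apply Hq; [apply h2; auto; apply h3; auto | apply h3; auto]. }
  lra.
Qed.

Lemma rE_ex (A : BanachAlgebra) q (a x : A) : rE A q a x (- q x).
Proof. exists 0. split; [lra|]. rewrite rs0, add_zero. ring. Qed.

Lemma rr_le (A : BanachAlgebra) mem nB q (a x : A) : basic A mem nB -> sublin A mem q -> mem a -> mem x ->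
  rr A q a x <= q x.
Proof.
  intros HB Hq Ha Hx. unfold rr.
  assert (- q x <= sup (rE A q a x)).
  { apply sup_ub with (q (rs (-1) x)). eapply rE_bound; eauto. apply rE_ex. }
  lra.
Qed.

Lemma rr_neg (A : BanachAlgebra) mem nB q (a : A) : basic A mem nB -> sublin A mem q -> mem a ->
  rr A q a (rs (-1) a) <= - q a.
Proof.
  intros HB Hq Ha. unfold rr.
  assert (q a <= sup (rE A q a (rs (-1) a))).
  { apply sup_ub with (q (rs (-1) (rs (-1) a))). eapply rE_bound; eauto. eapply mem_rs; eauto.
    exists 1. split; [lra|]. rewrite rs1, add_neg_l.
    rewrite (sublin_zero A mem q); [ring| apply HB | exact Hq]. }
  lra.
Qed.

Lemma rr_sublin (A : BanachAlgebra) mem nB q (a : A) : basic A mem nB -> sublin A mem q -> mem a ->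
  sublin A mem (rr A q a).
Proof.
  intros HB Hq Ha. pose proof HB as (h1&h2&h3&_).
  split.
  - intros x y Hx Hy. unfold rr.
    set (S := sup (rE A q a (add x y))).
    assert (key : forall e1 e2, rE A q a x e1 -> rE A q a y e2 -> e1 + e2 <= S).
    { intros e1 e2 [t1 [Ht1 ->]] [t2 [Ht2 ->]].
      apply Rle_trans with ((t1+t2)*q a - q (add (add x y) (rs (t1+t2) a))).
      - rewrite rs_addl, add_swap4.
        assert (q (add (add x (rs t1 a)) (add y (rs t2 a))) <= q (add x (rs t1 a)) + q (add y (rs t2 a))).
        { apply Hq; apply h2; auto; eapply mem_rs; eauto. }
        lra.
      - apply sup_ub with (q (rs (-1) (add x y))). eapply rE_bound; eauto.
        exists (t1 + t2). split; [lra|reflexivity]. }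
    assert (forall e1, rE A q a x e1 -> sup (rE A q a y) <= S - e1).
    { intros e1 He1. apply sup_le. exists (- q y); apply rE_ex.
      intros e2 He2. specialize (key e1 e2 He1 He2). lra. }
    assert (sup (rE A q a x) <= S - sup (rE A q a y)).
    { apply sup_le. exists (- q x); apply rE_ex.
      intros e1 He1. specialize (H e1 He1). lra. }
    lra.
  - intros t x Ht Hx. destruct (Req_dec t 0) as [->|Ht0].
    + rewrite rs0, Rmult_0_l. unfold rr.
      assert (E : sup (rE A q a zero) = 0).
      { apply Rle_antisym.
        - apply sup_le. exists (- q zero); apply rE_ex.
          intros y [s [Hs ->]]. rewrite add0l, (proj2 Hq); auto. lra.
        - apply sup_ub with 0.
          + intros y [s [Hs ->]]. rewrite add0l, (proj2 Hq); auto. lra.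
          + exists 0. split; [lra|]. rewrite rs0, add_zero, (sublin_zero A mem q h1 Hq). ring. }
      rewrite E. ring.
    + assert (Htp : 0 < t) by lra. unfold rr.
      assert (E1 : sup (rE A q a (rs t x)) <= t * sup (rE A q a x)).
      { apply sup_le. exists (- q (rs t x)); apply rE_ex.
        intros y [s [Hs ->]].
        assert (V : add (rs t x) (rs s a) = rs t (add x (rs (s / t) a))).
        { rewrite rs_addr, rs_rs. f_equal. f_equal. field. lra. }
        rewrite V, (proj2 Hq); auto; [| apply h2; auto; eapply mem_rs; eauto].
        assert ((s/t) * q a - q (add x (rs (s / t) a)) <= sup (rE A q a x)).
        { apply sup_ub with (q (rs (-1) x)). eapply rE_bound; eauto.
          exists (s/t). split; [apply Rle_mult_inv_pos; lra | reflexivity]. }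
        replace (s * q a - t * q (add x (rs (s / t) a))) with
          (t * ((s/t) * q a - q (add x (rs (s / t) a)))) by (field; lra).
        apply Rmult_le_compat_l; lra. }
      assert (E2 : sup (rE A q a x) <= / t * sup (rE A q a (rs t x))).
      { apply sup_le. exists (- q x); apply rE_ex.
        intros y [s [Hs ->]].
        assert (V : add (rs t x) (rs (t * s) a) = rs t (add x (rs s a))).
        { rewrite rs_addr, rs_rs. reflexivity. }
        assert (HH : (t*s) * q a - q (add (rs t x) (rs (t*s) a)) <= sup (rE A q a (rs t x))).
        { apply sup_ub with (q (rs (-1) (rs t x))).
          { eapply rE_bound; [exact HB|exact Hq|exact Ha|eapply mem_rs; eauto]. }
          exists (t*s). split; [apply Rmult_le_pos; lra | reflexivity]. }
        rewrite V, (proj2 Hq) in HH; auto; [| apply h2; auto; eapply mem_rs; eauto].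
        replace (s * q a - q (add x (rs s a))) with
          (/ t * (t * s * q a - t * q (add x (rs s a)))) by (field; lra).
        apply Rmult_le_compat_l; [apply Rlt_le, Rinv_0_lt_compat; lra | lra]. }
      assert (t * sup (rE A q a x) <= sup (rE A q a (rs t x))).
      { apply Rmult_le_compat_l with (r := t) in E2; [|lra].
        rewrite <- Rmult_assoc, Rinv_r in E2; lra. }
      lra.
Qed.

Definition SS (A : BanachAlgebra) (mem : A -> Prop) (nB : A -> R) (b : A) (q : A -> R) : Prop :=
  sublin A mem q /\ (forall x, mem x -> q x <= nB x) /\ q (rs (-1) b) <= - nB b.

Lemma nB_rs (A : BanachAlgebra) mem nB (x : A) t : basic A mem nB -> mem x -> nB (rs t x) = Rabs t * nB x.
Proof. intros (h1&h2&h3&h4&h5&h6) Hx. unfold rs. rewrite h6; auto. rewrite Cabs_real. reflexivity. Qed.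

Lemma nB_sublin (A : BanachAlgebra) mem nB : basic A mem nB -> sublin A mem nB.
Proof.
  intros HB. split. apply HB.
  intros t x Ht Hx. rewrite (nB_rs A mem nB x t HB Hx), Rabs_pos_eq; auto.
Qed.

Lemma SS_lower (A : BanachAlgebra) mem nB b q (x : A) : basic A mem nB -> SS A mem nB b q -> mem x -> - q x <= nB x.
Proof.
  intros HB [Hq [Hle _]] Hx. pose proof (sublin_neg A mem q x nB HB Hq Hx).
  assert (q (rs (-1) x) <= nB x).
  { rewrite <- (Rmult_1_l (nB x)). replace 1 with (Rabs (-1)) by (unfold Rabs; destruct Rcase_abs; lra).
    rewrite <- (nB_rs A mem nB x (-1) HB Hx). apply Hle. eapply mem_rs; eauto. }
  lra.
Qed.

Definition cinf (A : BanachAlgebra) (C : (A -> R) -> Prop) (x : A) : R :=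
  - sup (fun y => exists q, C q /\ y = - q x).

Lemma cinf_le (A : BanachAlgebra) mem nB b C q (x : A) : basic A mem nB ->
  (forall q, C q -> SS A mem nB b q) -> C q -> mem x -> cinf A C x <= q x.
Proof.
  intros HB HC Hq Hx. unfold cinf.
  assert (- q x <= sup (fun y => exists q, C q /\ y = - q x)).
  { apply sup_ub with (nB x). intros y [q' [Hq' ->]]. eapply SS_lower; eauto. eauto. }
  lra.
Qed.

Lemma cinf_ge (A : BanachAlgebra) C L (x : A) : (exists q, C q) ->
  (forall q, C q -> L <= q x) -> L <= cinf A C x.
Proof.
  intros [q0 Hq0] HL. unfold cinf.
  assert (sup (fun y => exists q, C q /\ y = - q x) <= - L).
  { apply sup_le. eauto. intros y [q [Hq ->]]. specialize (HL q Hq). lra. }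
  lra.
Qed.

Lemma cinf_SS (A : BanachAlgebra) mem nB b C : basic A mem nB -> mem b ->
  (forall q, C q -> SS A mem nB b q) -> (exists q, C q) ->
  (forall q1 q2, C q1 -> C q2 -> (forall x, mem x -> q1 x <= q2 x) \/ (forall x, mem x -> q2 x <= q1 x)) ->
  SS A mem nB b (cinf A C).
Proof.
  intros HB Hb HC Hne Hch. pose proof HB as (h1&h2&h3&_).
  destruct Hne as [q0 Hq0].
  split; [split|split].
  - intros x y Hx Hy.
    assert (K : forall q1 q2, C q1 -> C q2 -> cinf A C (add x y) <= q1 x + q2 y).
    { intros q1 q2 H1 H2.
      destruct (HC q1 H1) as [[S1 _] _]. destruct (HC q2 H2) as [[S2 _] _].
      destruct (Hch q1 q2 H1 H2) as [L|L].
      - apply Rle_trans with (q1 (add x y)). eapply cinf_le; eauto.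
        specialize (S1 x y Hx Hy). specialize (L y Hy). lra.
      - apply Rle_trans with (q2 (add x y)). eapply cinf_le; eauto.
        specialize (S2 x y Hx Hy). specialize (L x Hx). lra. }
    assert (K2 : forall q2, C q2 -> cinf A C (add x y) - q2 y <= cinf A C x).
    { intros q2 H2. apply cinf_ge. eauto. intros q1 H1. specialize (K q1 q2 H1 H2). lra. }
    assert (cinf A C (add x y) - cinf A C x <= cinf A C y).
    { apply cinf_ge. eauto. intros q2 H2. specialize (K2 q2 H2). lra. }
    lra.
  - intros t x Ht Hx. destruct (Req_dec t 0) as [->|Ht0].
    + rewrite rs0, Rmult_0_l. apply Rle_antisym.
      * apply Rle_trans with (q0 zero). eapply cinf_le; eauto.
        destruct (HC q0 Hq0) as [Sq _]. rewrite (sublin_zero A mem q0 h1 Sq). lra.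
      * apply cinf_ge. eauto. intros q Hq. destruct (HC q Hq) as [Sq _].
        rewrite (sublin_zero A mem q h1 Sq). lra.
    + apply Rle_antisym.
      * assert (cinf A C (rs t x) / t <= cinf A C x).
        { apply cinf_ge. eauto. intros q Hq.
          assert (cinf A C (rs t x) <= q (rs t x)) by (eapply cinf_le; eauto; eapply mem_rs; eauto).
          destruct (HC q Hq) as [[_ Hh] _]. rewrite Hh in H; auto.
          apply Rmult_le_reg_l with t; [lra|]. unfold Rdiv.
          replace (t * (cinf A C (rs t x) * / t)) with (cinf A C (rs t x)) by (field; lra). lra. }
        apply Rmult_le_compat_l with (r := t) in H; [|lra].
        replace (t * (cinf A C (rs t x) / t)) with (cinf A C (rs t x)) in H by (field; lra). lra.
      * apply cinf_ge. eauto. intros q Hq.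
        destruct (HC q Hq) as [[_ Hh] _]. rewrite Hh; auto.
        apply Rmult_le_compat_l; [lra|]. eapply cinf_le; eauto.
  - intros x Hx. apply Rle_trans with (q0 x). eapply cinf_le; eauto. apply (HC q0 Hq0). auto.
  - apply Rle_trans with (q0 (rs (-1) b)); [eapply cinf_le; eauto; eapply mem_rs; eauto | apply (HC q0 Hq0)].
Qed.

From mathcomp Require classical_sets boolp.

Lemma asb_intro (P : Prop) : P -> boolp.asbool P = true.
Proof. intros H. destruct (boolp.asboolP P); [reflexivity | contradiction]. Qed.

Lemma asb_elim (P : Prop) : boolp.asbool P = true -> P.
Proof. intros H. destruct (boolp.asboolP P); [assumption | discriminate]. Qed.

Lemma HahnB (A : BanachAlgebra) mem nB (b : A) : basic A mem nB -> mem b ->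
  exists phi : A -> R, (forall x y, mem x -> mem y -> phi (add x y) = phi x + phi y) /\
    (forall t x, mem x -> phi (rs t x) = t * phi x) /\
    (forall x, mem x -> Rabs (phi x) <= nB x) /\ phi b = nB b.
Proof.
  intros HB Hb. pose proof HB as (h1&h2&h3&_).
  assert (HnB := nB_sublin A mem nB HB).
  assert (q0S : SS A mem nB b (rr A nB b)).
  { split; [|split].
    - apply (rr_sublin A mem nB); auto.
    - intros x Hx. eapply rr_le; eauto.
    - eapply rr_neg; eauto. }
  pose (T := {q : A -> R | SS A mem nB b q}).
  pose (t0 := exist _ (rr A nB b) q0S : T).
  pose (Rel := fun s t : T => boolp.asbool (forall x, mem x -> proj1_sig t x <= proj1_sig s x)).
  destruct (@classical_sets.ZL_preorder T t0 Rel) as [qm Hqm].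
  - intros t. apply asb_intro. intros; lra.
  - intros r s t H1 H2. apply asb_intro. apply asb_elim in H1. apply asb_elim in H2.
    intros x Hx. specialize (H1 x Hx). specialize (H2 x Hx). lra.
  - intros Aset Htot. destruct (classic (exists s, Aset s)) as [[s0 Hs0]|Hne].
    + pose (C := fun q => exists s : T, Aset s /\ proj1_sig s = q).
      assert (HC : forall q, C q -> SS A mem nB b q).
      { intros q [s [_ <-]]. exact (proj2_sig s). }
      assert (HcS : SS A mem nB b (cinf A C)).
      { apply cinf_SS; auto. exists (proj1_sig s0). exists s0. auto.
        intros q1 q2 [s1 [H1 <-]] [s2 [H2 <-]].
        destruct (Htot s1 s2 H1 H2) as [L|L]; apply asb_elim in L; [right|left]; exact L. }
      exists (exist _ (cinf A C) HcS). intros s Hs. apply asb_intro. intros x Hx. simpl.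
      eapply cinf_le; eauto. exists s. auto.
    + exists t0. intros s Hs. exfalso. eauto.
  - unfold classical_sets.premaximal in Hqm.
    destruct qm as [q [Sq [Hle Hbn]]]. simpl in Hqm.
    assert (Hneg : forall a, mem a -> q (rs (-1) a) = - q a).
    { intros a Ha.
      assert (Hr : SS A mem nB b (rr A q a)).
      { split; [|split].
        - apply (rr_sublin A mem nB); auto.
        - intros x Hx. apply Rle_trans with (q x); [eapply rr_le; eauto | auto].
        - apply Rle_trans with (q (rs (-1) b)); [eapply rr_le; eauto; eapply mem_rs; eauto | auto]. }
      specialize (Hqm (exist _ (rr A q a) Hr)).
      assert (H1 : is_true (Rel (exist _ q (conj Sq (conj Hle Hbn))) (exist _ (rr A q a) Hr))).
      { apply asb_intro. intros x Hx. simpl. eapply rr_le; eauto. }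
      specialize (Hqm H1). apply asb_elim in Hqm. simpl in Hqm.
      assert (q (rs (-1) a) <= rr A q a (rs (-1) a)) by (apply Hqm; eapply mem_rs; eauto).
      pose proof (rr_neg A mem nB q a HB Sq Ha).
      pose proof (sublin_neg A mem q a nB HB Sq Ha). lra. }
    assert (Hadd : forall x y, mem x -> mem y -> q (add x y) = q x + q y).
    { intros x y Hx Hy. apply Rle_antisym. apply Sq; auto.
      assert (E : add (rs (-1) x) (rs (-1) y) = rs (-1) (add x y)) by (rewrite rs_addr; reflexivity).
      assert (q (add (rs (-1) x) (rs (-1) y)) <= q (rs (-1) x) + q (rs (-1) y)).
      { apply Sq; eapply mem_rs; eauto. }
      rewrite E, !Hneg in H; auto. lra. }
    assert (Hsc : forall t x, mem x -> q (rs t x) = t * q x).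
    { intros t x Hx. destruct (Rle_dec 0 t) as [Ht|Ht].
      - apply Sq; auto.
      - replace t with ((-1) * (-t)) by ring. rewrite <- rs_rs, Hneg, (proj2 Sq); try lra.
        auto. eapply mem_rs; eauto. }
    exists q. split; [exact Hadd|split; [exact Hsc|split]].
    + intros x Hx. apply Rabs_le. split.
      * assert (q (rs (-1) x) <= nB (rs (-1) x)) by (apply Hle; eapply mem_rs; eauto).
        rewrite Hneg, (nB_rs A mem nB x (-1) HB Hx) in H; auto.
        replace (Rabs (-1)) with 1 in H by (unfold Rabs; destruct Rcase_abs; lra). lra.
      * auto.
    + apply Rle_antisym; auto. pose proof Hbn as Hbn'. rewrite Hneg in Hbn'; auto. lra.
Qed.
Lemma Rabs_le_between x c : Rabs x <= c -> - c <= x <= c.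
Proof. unfold Rabs; destruct Rcase_abs; intros; lra. Qed.

Definition sg (r : R) : R := if Rle_dec 0 r then 1 else -1.

Lemma sg_sq r : sg r * sg r = 1.
Proof. unfold sg; destruct Rle_dec; ring. Qed.
Lemma sg_abs r : Rabs (sg r) = 1.
Proof. unfold sg; destruct Rle_dec; unfold Rabs; destruct Rcase_abs; lra. Qed.
Lemma sg_pos r : 0 <= sg r * r.
Proof. unfold sg; destruct Rle_dec; lra. Qed.

Fixpoint hh (A : BanachAlgebra) (pb : nat -> A) (pf : nat -> A -> R) (n : nat) : A -> R :=
  match n with
  | O => fun _ => 0
  | S k => fun x => hh A pb pf k x + (/4)^k * (sg (hh A pb pf k (pb k)) * pf k x)
  end.

Definition lim (s : nat -> R) : R := epsilon (inhabits 0) (fun l => Un_cv s l).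

Lemma lim_spec s : Cauchy_crit s -> Un_cv s (lim s).
Proof. intros H. unfold lim. apply epsilon_spec. destruct (R_complete s H) as [l Hl]. eauto. Qed.

Lemma Un_cv_ext s t l : (forall n, s n = t n) -> Un_cv s l -> Un_cv t l.
Proof. intros E H eps He. destruct (H eps He) as [N HN]. exists N. intros n Hn. rewrite <- E. auto. Qed.

Lemma Un_cv_const c : Un_cv (fun _ => c) c.
Proof. intros eps He. exists O. intros n _. unfold R_dist. rewrite Rminus_diag, Rabs_R0. lra. Qed.

Lemma lim_le s l N c : Un_cv s l -> (forall n, (N <= n)%nat -> s n <= c) -> l <= c.
Proof.
  intros H Hs. destruct (Rle_dec l c) as [|Hlc]; auto. exfalso.
  destruct (H (l - c)) as [N' HN']; [lra|].
  specialize (HN' (max N N') (Nat.le_max_r _ _)). specialize (Hs (max N N') (Nat.le_max_l _ _)).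
  unfold R_dist in HN'. apply Rabs_def2 in HN'. lra.
Qed.

Lemma lim_ge s l N c : Un_cv s l -> (forall n, (N <= n)%nat -> c <= s n) -> c <= l.
Proof.
  intros H Hs. destruct (Rle_dec c l) as [|Hlc]; auto. exfalso.
  destruct (H (c - l)) as [N' HN']; [lra|].
  specialize (HN' (max N N') (Nat.le_max_r _ _)). specialize (Hs (max N N') (Nat.le_max_l _ _)).
  unfold R_dist in HN'. apply Rabs_def2 in HN'. lra.
Qed.

Lemma glide (A : BanachAlgebra) mem nB (pb : nat -> A) (pf : nat -> A -> R) :
  basic A mem nB ->
  (forall k, mem (pb k)) -> (forall k, nB (pb k) = 1) -> (forall k, pf k (pb k) = 1) ->
  (forall k x y, mem x -> mem y -> pf k (add x y) = pf k x + pf k y) ->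
  (forall k t x, mem x -> pf k (rs t x) = t * pf k x) ->
  (forall k x, mem x -> Rabs (pf k x) <= nB x) ->
  exists u : A -> R,
    (forall x y, mem x -> mem y -> u (add x y) = u x + u y) /\
    (forall t x, mem x -> u (rs t x) = t * u x) /\
    (forall x, mem x -> Rabs (u x) <= 4/3 * nB x) /\
    (forall n, exists bn, mem bn /\ norm bn = norm (pb n) /\ 2/3 * (/4)^n <= u bn).
Proof.
  intros HB Hpb HnB Hpf1 Hfadd Hfrs Hfb.
  pose proof HB as (h1&h2&h3&h4&_).
  set (h := hh A pb pf).
  assert (Hadd : forall n x y, mem x -> mem y -> h n (add x y) = h n x + h n y).
  { induction n; intros x y Hx Hy; unfold h in *; simpl. ring. rewrite IHn, Hfadd; auto. ring. }
  assert (Hrs : forall n t x, mem x -> h n (rs t x) = t * h n x).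
  { induction n; intros t x Hx; unfold h in *; simpl. ring. rewrite IHn, Hfrs; auto. ring. }
  assert (Hp4 : forall n, 0 <= (/4)^n) by (intros; apply pow_le; lra).
  assert (Hdiff : forall x, mem x -> forall n j,
            Rabs (h (n + j)%nat x - h n x) <= 4/3 * ((/4)^n - (/4)^(n+j)) * nB x).
  { intros x Hx n j. induction j.
    - rewrite Nat.add_0_r, Rminus_diag, Rabs_R0. lra.
    - rewrite Nat.add_succ_r. unfold h in *. simpl.
      set (P := (/4)^(n+j)) in *. set (Q := (/4)^n) in *.
      set (d := hh A pb pf (n + j)%nat x - hh A pb pf n x) in *.
      set (s := sg (hh A pb pf (n + j)%nat (pb (n + j)%nat))).
      replace (hh A pb pf (n + j)%nat x + P * (s * pf (n + j)%nat x) - hh A pb pf n x)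
        with (d + P * (s * pf (n + j)%nat x)) by (unfold d; ring).
      assert (E : Rabs (P * (s * pf (n + j)%nat x)) <= P * nB x).
      { assert (Hs : Rabs s = 1) by apply sg_abs.
        rewrite !Rabs_mult, Hs, (Rabs_pos_eq P) by (apply Hp4).
        apply Rmult_le_compat_l. apply Hp4. rewrite Rmult_1_l. auto. }
      pose proof (Rabs_triang d (P * (s * pf (n + j)%nat x))).
      assert (0 <= P) by apply Hp4. pose proof (h4 x Hx). nra. }
  assert (Hdiff2 : forall x, mem x -> forall n m, (n <= m)%nat ->
            Rabs (h m x - h n x) <= 4/3 * (/4)^n * nB x).
  { intros x Hx n m Hnm. replace m with (n + (m - n))%nat by lia.
    pose proof (Hdiff x Hx n (m - n)%nat). pose proof (Hp4 (n + (m-n))%nat). pose proof (h4 x Hx). nra. }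
  assert (Hbd : forall x, mem x -> forall n, Rabs (h n x) <= 4/3 * nB x).
  { intros x Hx n. pose proof (Hdiff2 x Hx O n (Nat.le_0_l n)). simpl in H.
    rewrite Rminus_0_r in H. lra. }
  assert (Hcau : forall x, mem x -> Cauchy_crit (fun n => h n x)).
  { intros x Hx eps He. pose proof (h4 x Hx).
    destruct (pow_lt_1_zero (/4)) with (y := eps / (3 * (nB x + 1))) as [N HN].
    { rewrite Rabs_pos_eq; lra. }
    { apply Rdiv_lt_0_compat; lra. }
    exists N. intros n m Hn Hm. unfold R_dist.
    pose proof (Hdiff2 x Hx N n Hn). pose proof (Hdiff2 x Hx N m Hm).
    specialize (HN N (le_n N)). rewrite Rabs_pos_eq in HN by apply Hp4.
    pose proof (Rabs_triang (h n x - h N x) (h N x - h m x)).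
    replace (h n x - h N x + (h N x - h m x)) with (h n x - h m x) in H2 by ring.
    rewrite <- Rabs_Ropp in H1. replace (- (h m x - h N x)) with (h N x - h m x) in H1 by ring.
    assert (4/3 * (/4)^N * nB x < eps / 2).
    { apply Rle_lt_trans with (4/3 * (eps / (3 * (nB x + 1))) * nB x).
      apply Rmult_le_compat_r; [lra|]. apply Rmult_le_compat_l; lra.
      unfold Rdiv. field_simplify; [|lra].
      apply Rmult_lt_reg_r with (9 * nB x + 9); [lra|]. field_simplify; [|lra]. nra. }
    lra. }
  set (u := fun x => lim (fun n => h n x)).
  assert (Hu : forall x, mem x -> Un_cv (fun n => h n x) (u x)).
  { intros x Hx. apply lim_spec. auto. }
  exists u. split; [|split; [|split]].
  - intros x y Hx Hy. apply UL_sequence with (fun n => h n (add x y)). apply Hu; auto.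
    apply Un_cv_ext with (fun n => h n x + h n y). intros; rewrite Hadd; auto.
    apply CV_plus; auto.
  - intros t x Hx. apply UL_sequence with (fun n => h n (rs t x)). apply Hu; eapply mem_rs; eauto.
    apply Un_cv_ext with (fun n => t * h n x). intros; rewrite Hrs; auto.
    apply CV_mult; [apply Un_cv_const | auto].
  - intros x Hx. apply Rabs_le. split.
    + apply lim_ge with (fun n => h n x) O. auto. intros n _. pose proof (Hbd x Hx n).
      apply Rabs_le_between in H. lra.  
    + apply lim_le with (fun n => h n x) O. auto. intros n _. pose proof (Hbd x Hx n).
      apply Rabs_le_between in H. lra.
  - intros n. set (sn := sg (h n (pb n))).
    exists (rs sn (pb n)). split; [eapply mem_rs; eauto|split].
    + rewrite norm_rs. unfold sn; rewrite sg_abs. ring.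
    + assert (Hm : mem (rs sn (pb n))) by (eapply mem_rs; eauto).
      assert (HS : (/4)^n <= h (S n) (rs sn (pb n))).
      { unfold h at 1. simpl. fold h. rewrite !Hrs, Hfrs, Hpf1; auto.
        fold sn. pose proof (sg_pos (h n (pb n))). fold sn in H.
        replace (sn * (sn * 1)) with 1 by (unfold sn; rewrite Rmult_1_r; symmetry; apply sg_sq).
        lra. }
      assert (HnBb : nB (rs sn (pb n)) = 1).
      { rewrite (nB_rs A mem nB); auto. unfold sn; rewrite sg_abs, HnB. ring. }
      apply lim_ge with (fun m => h m (rs sn (pb n))) (S n). auto.
      intros m Hm'. pose proof (Hdiff2 _ Hm (S n) m Hm'). rewrite HnBb in H.
      apply Rabs_le_between in H. simpl in H. lra.
Qed.

Definition n1 (z : Defs.C) : R := Rabs (Re z) + Rabs (Im z).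
Definition Ci : Defs.C := mkC 0 1.

Lemma n1_ge0 z : 0 <= n1 z.
Proof. unfold n1. pose proof (Rabs_pos (Re z)); pose proof (Rabs_pos (Im z)); lra. Qed.

Lemma n1_add z w : n1 (Cadd z w) <= n1 z + n1 w.
Proof. unfold n1, Cadd; simpl. pose proof (Rabs_triang (Re z) (Re w)); pose proof (Rabs_triang (Im z) (Im w)). lra. Qed.

Lemma n1_mul z w : n1 (Cmul z w) <= n1 z * n1 w.
Proof.
  unfold n1, Cmul; simpl. destruct z as [a b]; destruct w as [c d]; simpl.
  pose proof (Rabs_triang (a*c) (- (b*d))). pose proof (Rabs_triang (a*d) (b*c)).
  unfold Rminus. rewrite Rabs_Ropp in H. rewrite !Rabs_mult in H, H0.
  pose proof (Rabs_pos a); pose proof (Rabs_pos b); pose proof (Rabs_pos c); pose proof (Rabs_pos d).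
  nra.
Qed.

Lemma Re_le_Cabs z : Rabs (Re z) <= Cabs z.
Proof. unfold Cabs. rewrite <- sqrt_Rsqr_abs. apply sqrt_le_1_alt. unfold Rsqr.
  pose proof (Rle_0_sqr (Im z)). unfold Rsqr in H. lra. Qed.

Lemma Im_le_Cabs z : Rabs (Im z) <= Cabs z.
Proof. unfold Cabs. rewrite <- sqrt_Rsqr_abs. apply sqrt_le_1_alt. unfold Rsqr.
  pose proof (Rle_0_sqr (Re z)). unfold Rsqr in H. lra. Qed.

Lemma n1_le_Cabs z : n1 z <= 2 * Cabs z.
Proof. unfold n1. pose proof (Re_le_Cabs z); pose proof (Im_le_Cabs z). lra. Qed.

Lemma Cabs_le_n1 z : Cabs z <= n1 z.
Proof.
  unfold Cabs, n1. rewrite <- (sqrt_Rsqr (Rabs (Re z) + Rabs (Im z))).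
  2: { pose proof (Rabs_pos (Re z)); pose proof (Rabs_pos (Im z)); lra. }
  apply sqrt_le_1_alt. unfold Rsqr.
  pose proof (Rabs_pos (Re z)); pose proof (Rabs_pos (Im z)).
  assert (Re z * Re z = Rabs (Re z) * Rabs (Re z)) by (rewrite <- Rabs_mult, Rabs_pos_eq; [ring| apply Rle_0_sqr]).
  assert (Im z * Im z = Rabs (Im z) * Rabs (Im z)) by (rewrite <- Rabs_mult, Rabs_pos_eq; [ring| apply Rle_0_sqr]).
  nra.
Qed.

Lemma fold_bound (A : BanachAlgebra) {T : Type} (P : T -> Prop) (coef : T -> Defs.C) (val : T -> A -> Defs.C)
  (nA : A -> R) :
  (forall t, P t -> exists D, forall a, Cabs (val t a) <= D * nA a) ->
  forall l, Forall P l -> exists Cst, forall a,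
    n1 (fold_right (fun t acc => Cadd (Cmul (coef t) (val t a)) acc) C0 l) <= Cst * nA a.
Proof.
  intros HP l Hl. induction Hl as [|t l Ht Hl IH].
  - exists 0. intros a. simpl. unfold n1, C0; simpl. rewrite Rabs_R0. lra.
  - destruct IH as [C1' HC1]. destruct (HP t Ht) as [D HD].
    exists (n1 (coef t) * 2 * D + C1'). intros a. simpl.
    pose proof (n1_add (Cmul (coef t) (val t a)) (fold_right (fun t acc => Cadd (Cmul (coef t) (val t a)) acc) C0 l)).
    pose proof (n1_mul (coef t) (val t a)).
    pose proof (n1_le_Cabs (val t a)). specialize (HD a). specialize (HC1 a).
    pose proof (n1_ge0 (coef t)).
    assert (n1 (coef t) * n1 (val t a) <= n1 (coef t) * (2 * (D * nA a))).
    { apply Rmult_le_compat_l; lra. }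
    nra.
Qed.

Lemma tri_bound (A : BanachAlgebra) mem nB K' f m :
  (forall b a, mem b -> mem (mul b a)) -> 0 <= K' ->
  (forall b a, mem b -> nB (mul b a) <= K' * nB b * norm a) ->
  in_dual A mem nB f -> in_bidual A mem nB m ->
  exists D, forall a : A, Cabs (tri_fm A f m a) <= D * norm a.
Proof.
  intros Hid HK HK2 [fa [fs [Kf [HKf Hfb]]]] [_ [_ [M [HM Hm]]]].
  exists (M * (Kf * K')). intros a. unfold tri_fm.
  assert (Hd : in_dual A mem nB (tri_af A a f)).
  { split; [|split].
    - intros x y Hx Hy. unfold tri_af. rewrite mul_addl. apply fa; auto.
    - intros c x Hx. unfold tri_af. rewrite mul_scall. apply fs; auto.
    - exists (Kf * K' * norm a). split.
      + pose proof (norm_ge0 A a). apply Rmult_le_pos; [apply Rmult_le_pos|]; auto.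
      + intros x Hx. unfold tri_af. apply Rle_trans with (Kf * nB (mul x a)). auto.
        replace (Kf * K' * norm a * nB x) with (Kf * (K' * nB x * norm a)) by ring.
        apply Rmult_le_compat_l; auto. }
  assert (Hb : fbound A mem nB (tri_af A a f) (Kf * K' * norm a)).
  { destruct Hd as [_ [_ _]]. split.
    + pose proof (norm_ge0 A a). apply Rmult_le_pos; [apply Rmult_le_pos|]; auto.
    + intros x Hx. unfold tri_af. apply Rle_trans with (Kf * nB (mul x a)). auto.
      replace (Kf * K' * norm a * nB x) with (Kf * (K' * nB x * norm a)) by ring.
      apply Rmult_le_compat_l; auto. }
  specialize (Hm _ _ Hd Hb). replace (M * (Kf * K') * norm a) with (M * (Kf * K' * norm a)) by ring. exact Hm.
Qed.

Lemma sq_bound (A : BanachAlgebra) mem nB K' m f :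
  (forall b a, mem b -> mem (mul a b)) -> 0 <= K' ->
  (forall b a, mem b -> nB (mul a b) <= K' * norm a * nB b) ->
  in_bidual A mem nB m -> in_dual A mem nB f ->
  exists D, forall a : A, Cabs (sq_mf A m f a) <= D * norm a.
Proof.
  intros Hid HK HK2 [_ [_ [M [HM Hm]]]] [fa [fs [Kf [HKf Hfb]]]].
  exists (M * (Kf * K')). intros a. unfold sq_mf.
  assert (Hb : fbound A mem nB (sq_fa A f a) (Kf * K' * norm a)).
  { split.
    + pose proof (norm_ge0 A a). apply Rmult_le_pos; [apply Rmult_le_pos|]; auto.
    + intros x Hx. unfold sq_fa. apply Rle_trans with (Kf * nB (mul a x)). auto.
      replace (Kf * K' * norm a * nB x) with (Kf * (K' * norm a * nB x)) by ring.
      apply Rmult_le_compat_l; auto. }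
  assert (Hd : in_dual A mem nB (sq_fa A f a)).
  { split; [|split].
    - intros x y Hx Hy. unfold sq_fa. rewrite mul_addr. apply fa; auto.
    - intros c x Hx. unfold sq_fa. rewrite mul_scalr. apply fs; auto.
    - eauto. }
  specialize (Hm _ _ Hd Hb). replace (M * (Kf * K') * norm a) with (M * (Kf * K' * norm a)) by ring. exact Hm.
Qed.

Lemma small (A : BanachAlgebra) mem nB : basic A mem nB ->
  (exists K, forall b, mem b -> norm b <= K * nB b) -> proper A mem nB ->
  forall d, 0 < d -> exists b : A, mem b /\ nB b = 1 /\ d * norm b < 1.
Proof.
  intros HB [K HK] Hp d Hd. pose proof HB as (h1&h2&h3&h4&_).
  apply NNPP. intros Hn. apply Hp.
  exists (Rabs K + 1), d. split; [pose proof (Rabs_pos K); lra|]. split; [auto|].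
  intros b Hb. split.
  - apply Rle_trans with (K * nB b); auto. pose proof (h4 b Hb). pose proof (Rle_abs K). nra.
  - destruct (Req_dec (nB b) 0) as [E|E].
    + rewrite E. pose proof (norm_ge0 A b). nra.
    + assert (Hpos : 0 < nB b) by (pose proof (h4 b Hb); lra).
      destruct (Rle_dec (nB b) (d * norm b)) as [|Hlt]; auto. exfalso. apply Hn.
      exists (rs (/ nB b) b). split; [eapply mem_rs; eauto|split].
      + rewrite (nB_rs A mem nB); auto. rewrite Rabs_pos_eq by (apply Rlt_le, Rinv_0_lt_compat; auto).
        field; lra.
      + rewrite norm_rs, Rabs_pos_eq by (apply Rlt_le, Rinv_0_lt_compat; auto).
        apply Rmult_lt_reg_r with (nB b); auto.
        replace (d * (/ nB b * norm b) * nB b) with (d * norm b) by (field; lra). lra.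
Qed.

Lemma scal_decomp (A : BanachAlgebra) a b (x : A) :
  scal (mkC a b) x = add (rs a x) (rs b (scal Ci x)).
Proof.
  unfold rs. rewrite scal_assoc, <- scal_addl. f_equal. unfold Cadd, Cmul, Ci; simpl. f_equal; ring.
Qed.

Lemma scal_Ci_decomp (A : BanachAlgebra) a b (x : A) :
  scal Ci (scal (mkC a b) x) = add (rs (-b) x) (rs a (scal Ci x)).
Proof.
  rewrite scal_assoc, <- scal_decomp. f_equal. unfold Cmul, Ci; simpl. f_equal; ring.
Qed.

Lemma unbounded (A : BanachAlgebra) mem nB : basic A mem nB ->
  (exists K, forall b, mem b -> norm b <= K * nB b) -> proper A mem nB ->
  exists g, in_dual A mem nB g /\ ~ (exists Cst, forall a, mem a -> n1 (g a) <= Cst * norm a).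
Proof.
  intros HB HK Hp. pose proof HB as (h1&h2&h3&h4&h5&h6).
  pose (P := fun (n : nat) (p : A * (A -> R)) =>
    mem (fst p) /\ nB (fst p) = 1 /\ ((INR n + 1) / (/4)^n) * norm (fst p) < 1 /\
    snd p (fst p) = 1 /\
    (forall x y, mem x -> mem y -> snd p (add x y) = snd p x + snd p y) /\
    (forall t x, mem x -> snd p (rs t x) = t * snd p x) /\
    (forall x, mem x -> Rabs (snd p x) <= nB x)).
  assert (Hex : forall n, exists p, P n p).
  { intros n. assert (Hd : 0 < (INR n + 1) / (/4)^n).
    { apply Rdiv_lt_0_compat. pose proof (pos_INR n); lra. apply pow_lt; lra. }
    destruct (small A mem nB HB HK Hp _ Hd) as [b [Hb [Hb1 Hb2]]].
    destruct (HahnB A mem nB b HB Hb) as [phi [Pa [Ps [Pb Pv]]]].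
    exists (b, phi). unfold P; simpl. repeat split; auto. rewrite Pv; auto. }
  pose (pick := fun n => epsilon (inhabits (zero, fun _ : A => 0)) (P n)).
  assert (Hpick : forall n, P n (pick n)) by (intros n; apply epsilon_spec, Hex).
  destruct (glide A mem nB (fun n => fst (pick n)) (fun n => snd (pick n)) HB)
    as [u [ua [us [ub ulow]]]];
    try (intros; apply Hpick; auto).
  pose (g := fun x => mkC (u x) (- u (scal Ci x))).
  assert (HCi : forall x, mem x -> mem (scal Ci x)) by (intros; apply h3; auto).
  exists g. split; [split; [|split]|].
  - intros x y Hx Hy. unfold g. rewrite scal_addr, !ua; auto. unfold Cadd; simpl. f_equal; ring.
  - intros c x Hx. destruct c as [a b]. unfold g. rewrite scal_Ci_decomp, scal_decomp.
    rewrite !ua, !us; try (eapply mem_rs; eauto); auto.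
    unfold Cmul; simpl. f_equal; ring.
  - exists (8/3). split; [lra|]. intros x Hx. unfold g.
    apply Rle_trans with (n1 (mkC (u x) (- u (scal Ci x)))). apply Cabs_le_n1.
    unfold n1; simpl. rewrite Rabs_Ropp.
    pose proof (ub x Hx). pose proof (ub _ (HCi x Hx)).
    rewrite h6 in H0; auto. replace (Cabs Ci) with 1 in H0.
    + lra.
    + unfold Cabs, Ci; simpl. replace (0*0+1*1) with 1 by ring. symmetry; apply sqrt_1.
  - intros [Cst HC].
    destruct (INR_archimed 1 (3/2 * Cst)) as [n Hn]; [lra|].
    destruct (ulow n) as [bn [Hbn [Hnorm Hlow]]].
    specialize (HC bn Hbn). unfold g, n1 in HC; simpl in HC.
    pose proof (Rle_abs (u bn)). pose proof (Rabs_pos (- u (scal Ci bn))).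
    destruct (Hpick n) as [_ [_ [Hsm _]]]. rewrite <- Hnorm in Hsm.
    assert (Hq : 0 < (/4)^n) by (apply pow_lt; lra).
    set (q := (/4)^n) in *. pose proof (norm_ge0 A bn). pose proof (pos_INR n).
    assert (Hsm' : (INR n + 1) * norm bn < q).
    { assert (E : (INR n + 1) / q * norm bn * q = (INR n + 1) * norm bn) by (field; lra).
      rewrite <- E. apply Rmult_lt_compat_r with (r := q) in Hsm; auto. lra. }
    rewrite Rmult_1_r in Hn.
    assert (2/3 * q <= Cst * norm bn) by lra.
    destruct (Rle_dec Cst 0).
    + nra.
    + nra.
Qed.

Theorem theorem1 (A : BanachAlgebra) (hA : faithful A) :
  (forall (mem : A -> Prop) (nB : A -> R),
     right_segal A mem nB -> proper A mem nB ->
     ~ (forall g, in_dual A mem nB g <-> span_tri A mem nB g)) /\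
  (forall (mem : A -> Prop) (nB : A -> R),
     left_segal A mem nB -> proper A mem nB ->
     ~ (forall g, in_dual A mem nB g <-> span_sq A mem nB g)).
Proof.
  split.
  - intros mem nB [HS [Hid [K [HK1 HK2]]]] Hp Heq.
    assert (HB := Segal_basic A mem nB HS).
    destruct (unbounded A mem nB HB (ex_intro _ K HK1) Hp) as [g [Hg Hnb]].
    apply Hnb. destruct (proj1 (Heq g) Hg) as [l [Hl Hv]].
    assert (HK' : forall b a, mem b -> nB (mul b a) <= Rmax K 0 * nB b * norm a).
    { intros b a Hb. apply Rle_trans with (K * nB b * norm a); auto.
      pose proof (proj1 (proj2 (proj2 (proj2 HB))) b Hb). pose proof (norm_ge0 A a).
      pose proof (Rmax_l K 0). assert (0 <= nB b * norm a) by (apply Rmult_le_pos; auto).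
      rewrite !Rmult_assoc. apply Rmult_le_compat_r; auto. }
    destruct (fold_bound A (fun t => in_dual A mem nB (snd (fst t)) /\ in_bidual A mem nB (snd t))
                (fun t => fst (fst t)) (fun t a => tri_fm A (snd (fst t)) (snd t) a) norm)
      with (l := l) as [Cst HC]; auto.
    { intros t [H1 H2]. eapply tri_bound; eauto. apply Rmax_r. }
    exists Cst. intros a Ha. rewrite Hv; auto.
  - intros mem nB [HS [Hid [K [HK1 HK2]]]] Hp Heq.
    assert (HB := Segal_basic A mem nB HS).
    destruct (unbounded A mem nB HB (ex_intro _ K HK1) Hp) as [g [Hg Hnb]].
    apply Hnb. destruct (proj1 (Heq g) Hg) as [l [Hl Hv]].
    assert (HK' : forall b a, mem b -> nB (mul a b) <= Rmax K 0 * norm a * nB b).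
    { intros b a Hb. apply Rle_trans with (K * norm a * nB b); auto.
      pose proof (proj1 (proj2 (proj2 (proj2 HB))) b Hb). pose proof (norm_ge0 A a).
      pose proof (Rmax_l K 0). assert (0 <= norm a * nB b) by (apply Rmult_le_pos; auto).
      rewrite !Rmult_assoc. apply Rmult_le_compat_r; auto. }
    destruct (fold_bound A (fun t => in_bidual A mem nB (snd (fst t)) /\ in_dual A mem nB (snd t))
                (fun t => fst (fst t)) (fun t a => sq_mf A (snd (fst t)) (snd t) a) norm)
      with (l := l) as [Cst HC]; auto.
    { intros t [H1 H2]. eapply sq_bound; eauto. apply Rmax_r. }
    exists Cst. intros a Ha. rewrite Hv; auto.
Qed.
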